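(* Let $(\gamma,\delta)$ be any pair of partitions. For each $1\le j\le l(\delta)$ let $$d_j=\#\{i:\ 2\le i\le l(\gamma),\ \gamma_i>\delta_j\}-\#\{i<j:\ \delta_i\text{ is unbalanced}\}.$$ Then $d_j\ge0$ for every $j$.
   Context: A partition is a finite nonincreasing sequence of positive integers (possibly empty); $l(\lambda)$ is its number of parts. Balanced parts: let $(\gamma,\delta)$ be a pair of partitions, with the convention $\gamma_j=0$ for $j>l(\gamma)$. The parts $\delta_1,\delta_2,\dots,\delta_{l(\delta)}$ are classified as balanced or unbalanced recursively in increasing order of index: $\delta_i$ is balanced if and only if $\gamma_{i+1}\le\delta_i$ and the number of indices $j$ with $2\le j\le l(\gamma)$ and $\gamma_j>\delta_i$ equals the number of indices $j<i$ for which $\delta_j$ is unbalanced; otherwise $\delta_i$ is unbalanced. *)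

(* Defs.v *)
From mathcomp Require Import all_boot all_order all_algebra.
Set Implicit Arguments. Unset Strict Implicit. Unset Printing Implicit Defensive.

Definition is_partition (l : seq nat) : Prop :=
  sorted geq l /\ all (fun x => 0 < x) l.

(* 1-based part access with gamma_j = 0 for j > l(gamma) (and for j = 0). *)
Definition part (l : seq nat) (j : nat) : nat := nth 0 l j.-1.

Definition nbig (gamma : seq nat) (x : nat) : nat :=
  #|[set j : 'I_(size gamma).+1 | (2 <= j) && (x < part gamma j)]|.

(* balanced_flags gamma delta : for i = 1..l(delta) (listed in order),
   whether delta_i is balanced, computed recursively in increasing order. *)
Fixpoint bal_aux (gamma : seq nat) (d : seq nat) (i unb : nat) : seq bool :=
  match d with
  | [::] => [::]
  | x :: d' =>
      let b := (part gamma i.+1 <= x) && (nbig gamma x == unb) in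
      b :: bal_aux gamma d' i.+1 (unb + ~~ b)
  end.

Definition balanced_flags (gamma delta : seq nat) : seq bool :=
  bal_aux gamma delta 1 0.

Definition balanced (gamma delta : seq nat) (i : nat) : bool :=
  nth false (balanced_flags gamma delta) i.-1.

Definition n_unbal_before (gamma delta : seq nat) (j : nat) : nat :=
  #|[set i : 'I_j | (1 <= i) && ~~ balanced gamma delta i]|.

Definition d_val (gamma delta : seq nat) (j : nat) : int :=
  (nbig gamma (part delta j))%:Z - (n_unbal_before gamma delta j)%:Z.

(* Main.v *)
Require Import Defs.
From mathcomp Require Import all_boot all_order all_algebra.
Import Order.TTheory GRing.Theory Num.Theory.

Lemma card_ord_count n (P : pred nat) :
  #|[set j : 'I_n | P j]| = count P (iota 0 n).
Proof.
rewrite cardsE cardE -(size_map val) -filter_map -val_enum_ord -?enumT size_filter.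
by rewrite /enum_mem -enumT.
Qed.


Lemma nbigE g x : nbig g x =
  count (fun j => (2 <= j) && (x < part g j)) (iota 0 (size g).+1).
Proof. by rewrite /nbig (card_ord_count _ (fun j => (2 <= j) && (x < part g j))). Qed.


Lemma key g d i unb k : k < size d ->
  nth false (bal_aux g d i unb) k =
  (part g (i + k).+1 <= nth 0 d k) &&
  (nbig g (nth 0 d k) ==
     unb + count (fun t => ~~ nth false (bal_aux g d i unb) t) (iota 0 k)).
Proof.
elim: d i unb k => [|x d IH] i unb [|k] //=; first by rewrite addn0 addn0.
rewrite ltnS => Hk.
rewrite IH // addSnnS; congr (_ && (_ == _)).
rewrite addnA; congr (_ + _).
by rewrite (iotaDl 1 0 k) count_map.
Qed.

Lemma nbig_mono g x y : x <= y -> nbig g y <= nbig g x.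
Proof.
move=> le; rewrite !nbigE; apply: sub_count => j /andP[-> /=].
exact: leq_ltn_trans.
Qed.

Lemma nbig_lb g x k : sorted geq g -> x < part g k.+2 -> k.+1 <= nbig g x.
Proof.
move=> sg hx.
have hk : k.+1 < size g.
  rewrite ltnNge; apply/negP => h; move: hx; by rewrite /part /= nth_default.
rewrite nbigE.
have -> : (size g).+1 = 2 + (k.+1 + ((size g).+1 - (k.+3))).
  by rewrite addnA subnKC.
rewrite !iotaD !count_cat add0n.
apply: leq_trans (leq_addl _ _); apply: leq_trans (leq_addr _ _).
have hall : all (fun j => (2 <= j) && (x < part g j)) (iota 2 k.+1).
  apply/allP; move=> j; rewrite mem_iota => /andP[j2 jk].
  rewrite j2 /=; apply: (leq_trans hx); rewrite /part /=.
  have := @sorted_leq_nth _ geq (fun y x z h1 h2 => leq_trans h2 h1) (fun a => leqnn a) 0 g sg.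
  move=> /(_ j.-1 k.+1); apply.
  - rewrite inE /=; apply: leq_ltn_trans hk; rewrite -ltnS.
    by case: j j2 jk => // j _.
  - by rewrite inE.
  - by case: j j2 jk => // j _.
by move: hall; rewrite all_count => /eqP ->; rewrite size_iota.
Qed.

Lemma sorted_nth_geq (s : seq nat) a b : sorted geq s -> a <= b -> b < size s ->
  nth 0 s b <= nth 0 s a.
Proof.
move=> ss ab bs.
have := @sorted_leq_nth _ geq (fun y x z h1 h2 => leq_trans h2 h1) (fun a => leqnn a) 0 s ss.
move=> /(_ a b); apply => //; rewrite inE //; exact: leq_ltn_trans bs.
Qed.

Lemma main_inv g d : sorted geq g -> sorted geq d -> forall k, k < size d ->
  count (fun t => ~~ nth false (balanced_flags g d) t) (iota 0 k)
  <= nbig g (nth 0 d k).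
Proof.
move=> sg sd; elim=> [|k IH] hk; first by [].
have hk' : k < size d by apply: ltnW.
have {}IH := IH hk'.
have hm : nbig g (nth 0 d k) <= nbig g (nth 0 d k.+1).
  by apply: nbig_mono; apply: sorted_nth_geq.
have -> : iota 0 k.+1 = iota 0 k ++ [:: k] by rewrite -addn1 iotaD.
rewrite count_cat /= addn0.
have := @key g d 1 0 k hk'.
rewrite /balanced_flags add0n add1n.
case: (nth false (bal_aux g d 1 0) k) => /= E.
  by rewrite addn0; apply: leq_trans hm.
case: (leqP (part g k.+2) (nth 0 d k)) => h.
  move: E; rewrite h /= => /esym/negbT hne.
  rewrite addn1; apply: leq_trans hm.
  by rewrite ltn_neqAle eq_sym hne IH.
have h2 : nth 0 d k.+1 < part g k.+2.
  apply: leq_ltn_trans h; exact: sorted_nth_geq.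
have hl := @nbig_lb g _ k sg h2. apply: leq_trans hl.
have := count_size (fun t => ~~ nth false (bal_aux g d 1 0) t) (iota 0 k).
by rewrite size_iota addn1 ltnS.
Qed.

Theorem mainTheorem4 (gamma delta : seq nat) :
  is_partition gamma -> is_partition delta ->
  forall j : nat, 1 <= j <= size delta ->
  (0 <= d_val gamma delta j)%R.
Proof.
move=> [sg _] [sd _] [|m] //= hm.
rewrite /d_val subr_ge0 lez_nat /n_unbal_before.
rewrite (card_ord_count _ (fun i => (1 <= i) && ~~ balanced gamma delta i)).
rewrite /= add0n (iotaDl 1 0 m) count_map.
apply: leq_trans (@main_inv gamma delta sg sd m hm); rewrite /part /=.
apply: sub_count => t /=; by rewrite add1n /balanced /=.
Qed.
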